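(* Let $n\mid(q-1)$, let $b\ge1$, $m\ge1$ be integers with $\gcd(b,n)=1$, let $t\in\{0,\dots,n-1\}$, and let $\ell$ be any integer with $m+1\le\ell\le n-2$. Put $A=\{\alpha^{t},\alpha^{t+b},\dots,\alpha^{t+(m-1)b},\alpha^{t+\ell b}\}$ and let $d_A^{\perp}$ be the minimum distance of the dual of $C_A$. Then $C_A$ is an optimal cyclic $(d_A^{\perp}-1)$-LRC, i.e. an optimal $(d_A^{\perp}-1,2)$-LRC.
   Context: Let $q$ be a prime power and $n\mid(q-1)$, so the set $R_n$ of all $n$-th roots of unity lies in $\mathbb{F}_q$; let $\alpha\in\mathbb{F}_q$ be a primitive $n$-th root of unity. For $Z\subseteq R_n$, $C_Z$ denotes the cyclic code of length $n$ over $\mathbb{F}_q$ with complete defining set $Z$, i.e. the ideal generated by $\prod_{\beta\in Z}(x-\beta)$ in $\mathbb{F}_q[x]/(x^n-1)$, identified with a subspace of $\mathbb{F}_q^n$; it has dimension $n-|Z|$. Locality: for a linear code $C\subseteq\mathbb{F}_q^n$ and integers $r\ge1$, $\delta\ge2$, the $i$-th coordinate has $(r,\delta)$-locality if there is $S_i\subseteq\{1,\dots,n\}$ with $i\in S_i$, $|S_i|\le r+\delta-1$ such that the punctured code $C|_{S_i}$ has minimum distance at least $\delta$; $C$ is an $(r,\delta)$-LRC if every coordinate has $(r,\delta)$-locality; an $r$-LRC is an $(r,2)$-LRC. An $[n,k,d]$ $(r,\delta)$-LRC is optimal if $d=n-k-(\lceil k/r\rceil-1)(\delta-1)+1$ (this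 quantity is always an upper bound on $d$); for $\delta=2$ this reads $d=n-k-\lceil k/r\rceil+2$. *)

(* Defs.v *)
From HB Require Import structures.
From mathcomp Require Import all_boot all_order all_algebra all_field.
Set Implicit Arguments. Unset Strict Implicit. Unset Printing Implicit Defensive.
Import Order.TTheory GRing.Theory Num.Theory.
Local Open Scope ring_scope.

Section Codes.
Variables (F : finFieldType) (n : nat).

(* Polynomial code: the ideal generated by g in F[x]/(x^n - 1); elements of
   the quotient ring are represented by polynomials of degree < n, i.e. by
   rVpoly v for v : 'rV_n, and a codeword c is identified with rVpoly c. *)
Definition ideal_code (g : {poly F}) : {set 'rV[F]_n} :=
  [set c | [exists v : 'rV[F]_n, rVpoly c == (rVpoly v * g) %% ('X^n - 1)]].

Definition cyclic_code (Z : {set F}) : {set 'rV[F]_n} :=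
  ideal_code (\prod_(beta in Z) ('X - beta%:P)).

Definition dual_code (C : {set 'rV[F]_n}) : {set 'rV[F]_n} :=
  [set v : 'rV[F]_n | [forall c : 'rV[F]_n, (c \in C) ==> (\sum_(i < n) c ord0 i * v ord0 i == 0)]].

Definition wt (c : 'rV[F]_n) : nat := #|[set i | c ord0 i != 0]|.

(* Minimum distance (minimum nonzero weight); n.+1 for the zero code. *)
Definition mindist (C : {set 'rV[F]_n}) : nat :=
  \big[minn/n.+1]_(c in C | c != 0) wt c.

Definition code_dim (C : {set 'rV[F]_n}) : nat := \dim <<enum C>>%VS.

(* The punctured code C|_S has minimum distance >= delta: every nonzero
   codeword of C|_S (i.e. restriction of some c in C to S) has weight >= delta. *)
Definition punct_mindist_ge (C : {set 'rV[F]_n}) (S : {set 'I_n}) (delta : nat) : Prop :=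
  forall c : 'rV[F]_n, c \in C -> (exists2 j, j \in S & c ord0 j != (0 : F)) ->
    (delta <= #|[set j in S | c ord0 j != 0%R]|)%N.

Definition has_locality (C : {set 'rV[F]_n}) (r delta : nat) (i : 'I_n) : Prop :=
  exists S : {set 'I_n}, [/\ i \in S, (#|S| <= r + delta - 1)%N &
                             punct_mindist_ge C S delta].

Definition is_LRC (C : {set 'rV[F]_n}) (r delta : nat) : Prop :=
  [/\ (0 < r)%N, (2 <= delta)%N & forall i : 'I_n, has_locality C r delta i].

Definition ceil_div (k r : nat) : nat := ((k + r.-1) %/ r)%N.

Definition optimal_LRC (C : {set 'rV[F]_n}) (r delta : nat) : Prop :=
  is_LRC C r delta /\
  ((mindist C)%:Z = n%:Z - (code_dim C)%:Z
      - ((ceil_div (code_dim C) r)%:Z - 1) * (delta%:Z - 1) + 1).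

End Codes.

(* Main.v *)
Require Import Defs.
From HB Require Import structures.
From mathcomp Require Import all_boot all_order all_algebra all_field.
From mathcomp Require Import zify ring.
From Stdlib Require Import Classical.
Import Order.TTheory GRing.Theory Num.Theory.
Local Open Scope ring_scope.

Lemma vand_zero (F : fieldType) (I : finType) (x a : I -> F) (s : nat) (J : {set I}) :
  (#|J| <= s)%N -> (forall j, j \notin J -> x j = 0) -> {in J &, injective a} ->
  (forall i, (i < s)%N -> \sum_j x j * a j ^+ i = 0) -> forall j, x j = 0.
Proof.
move=> cardJ xJ ainj hs j0.
have [j0J|j0nJ] := boolP (j0 \in J); last by rewrite xJ.
pose Q := \prod_(j <- enum (J :\ j0)) ('X - (a j)%:P).
have szQ : (size Q <= s)%N.
  rewrite size_prod_XsubC -cardE.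
  by move: cardJ; rewrite (cardsD1 j0 J) j0J.
have e0 : \sum_(i < s) Q`_i * (\sum_j x j * a j ^+ i) = 0.
  by rewrite big1 // => i _; rewrite hs ?mulr0.
have e1 : \sum_(i < s) Q`_i * (\sum_j x j * a j ^+ i) = \sum_j x j * Q.[a j].
  rewrite (eq_bigr (fun i : 'I_s => \sum_j Q`_(val i) * (x j * a j ^+ i))); last first.
    by move=> i _; rewrite big_distrr.
  rewrite exchange_big /=; apply: eq_bigr => j _.
  rewrite (horner_coef_wide _ szQ) big_distrr /=; apply: eq_bigr => i _.
  by rewrite mulrCA.
have e2 : \sum_j x j * Q.[a j] = x j0 * Q.[a j0].
  rewrite (bigD1 j0) //= big1 ?addr0 // => j jne.
  have [jJ|jnJ] := boolP (j \in J); last by rewrite (xJ j jnJ); apply: mul0r.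
  rewrite /Q horner_prod (bigD1_seq j) /=; last by rewrite enum_uniq.
    by rewrite !hornerE subrr /= mulr0 mul0r.
  by rewrite mem_enum !inE jne.
move: e0; rewrite e1 e2 => /eqP; rewrite mulf_eq0 => /orP[/eqP //|].
rewrite /Q horner_prod prodf_seq_eq0 => /hasP [j].
rewrite mem_enum !inE => /andP[jne jJ] /=.
rewrite !hornerE subr_eq0 => /eqP h.
by exfalso; move: jne; rewrite (ainj _ _ j0J jJ h) eqxx.
Qed.
Section MD.
Variables (F : finFieldType) (n : nat).
Implicit Types (C : {set 'rV[F]_n}) (c : 'rV[F]_n).

Lemma wt_le c : (wt c <= n)%N.
Proof. by rewrite /wt; apply: leq_trans (max_card _) _; rewrite card_ord. Qed.

Lemma bigmin_le (I : eqType) (r : seq I) (P : pred I) (f : I -> nat) x i :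
  i \in r -> P i -> (\big[minn/x]_(j <- r | P j) f j <= f i)%N.
Proof.
elim: r => // j r IH; rewrite inE big_cons => /orP[/eqP<- Pi|ir Pi].
  by rewrite Pi geq_minl.
case: (P j); last exact: IH.
exact: leq_trans (geq_minr _ _) (IH ir Pi).
Qed.

Lemma mindist_le C c : c \in C -> c != 0 -> (mindist C <= wt c)%N.
Proof.
move=> cC c0; rewrite /mindist; apply: bigmin_le; first exact: mem_index_enum.
by rewrite /= cC c0.
Qed.

Lemma mindist_ge C k : (forall c, c \in C -> c != 0 -> (k <= wt c)%N) ->
  (k <= n.+1)%N -> (k <= mindist C)%N.
Proof.
move=> h kn; rewrite /mindist; elim/big_ind: _ => //.
  by move=> x y hx hy; rewrite leq_min hx hy.
by move=> c /andP[]; apply: h.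
Qed.

Lemma mindist_attained C c0 : c0 \in C -> c0 != 0 ->
  exists c, [/\ c \in C, c != 0 & wt c = mindist C].
Proof.
move=> c0C c00.
have : mindist C = n.+1 \/ exists c, [/\ c \in C, c != 0 & wt c = mindist C].
  rewrite /mindist; elim/big_ind: _; first by left.
    move=> x y [->|[c [cC cn <-]]] [->|[c' [c'C c'n <-]]].
    - by left; rewrite minnn.
    - by right; exists c'; split=> //; rewrite minnC; apply/esym/minn_idPl; apply: leq_trans (wt_le _) _.
    - by right; exists c; split=> //; apply/esym/minn_idPl; apply: leq_trans (wt_le _) _.
    - case: (leqP (wt c) (wt c')) => h.
        by right; exists c; split=> //; apply/esym/minn_idPl.
      by right; exists c'; split=> //; rewrite minnC; apply/esym/minn_idPl/ltnW.
  by move=> c /andP[cC cn]; right; exists c.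
case=> // h; have := @mindist_le C c0 c0C c00; have := wt_le c0; rewrite h; lia.
Qed.

End MD.

Lemma ker_nonunit (F : fieldType) (p : nat) (M : 'M[F]_p) :
  M \notin unitmx -> exists2 y : 'rV_p, y != 0 & y *m M = 0.
Proof.
rewrite -row_free_unit -kermx_eq0 => kn.
have [i ri] : exists i, row i (kermx M) != 0.
  apply: NNPP => hn; move: kn; case/negP; apply/eqP/row_matrixP => i.
  rewrite row0; apply/eqP; apply: NNPP => hh; apply: hn; exists i; exact/negP.
by exists (row i (kermx M)) => //; rewrite -row_mul mulmx_ker row0.
Qed.

Lemma unit_ker (F : fieldType) (p : nat) (M : 'M[F]_p) (y : 'rV_p) :
  M \in unitmx -> y *m M = 0 -> y = 0.
Proof. by move=> uM h; rewrite -(mulmxK uM y) h mul0mx. Qed.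
Lemma grow_set (T : finType) (A B : {set T}) k : A \subset B ->
  (#|A| <= k <= #|B|)%N -> exists S : {set T}, [/\ A \subset S, S \subset B & #|S| = k].
Proof.
move=> AB /andP[h1 h2]; have [d hd] : exists d, k = (#|A| + d)%N by exists (k - #|A|)%N; lia.
elim: d A AB h1 hd => [|d IH] A AB h1 hd.
  by exists A; split => //; lia.
have [x] : exists x, x \in B :\: A.
  apply/set0Pn; rewrite -card_gt0 cardsD (setIidPr AB); lia.
rewrite inE => /andP[xA xB].
have xAB : x |: A \subset B by rewrite subUset sub1set xB AB.
have cx : #|x |: A| = #|A|.+1 by rewrite cardsU1 xA.
have [S [s1 s2 s3]] := IH (x |: A) xAB ltac:(lia) ltac:(lia).
exists S; split => //; apply: subset_trans s1; exact: subsetUr.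
Qed.

Lemma pick_f (n p : nat) (A B : {set 'I_n}) : A \subset B -> (#|A| <= p <= #|B|)%N ->
  exists f : 'I_p -> 'I_n, [/\ injective f, forall j, j \in A -> exists k, f k = j
                           & forall k, f k \in B].
Proof.
move=> AB h; have [S [s1 s2 s3]] := @grow_set _ A B p AB h.
exists (fun k => enum_val (cast_ord (esym s3) k)); split.
- by move=> x y /enum_val_inj /cast_ord_inj.
- move=> j jA; have jS : j \in S by apply: (subsetP s1).
  exists (cast_ord s3 (enum_rank_in jS j)).
  by rewrite cast_ordK enum_rankK_in.
- by move=> k; apply: (subsetP s2); apply: enum_valP.
Qed.

Lemma ceil1 k r : (0 < k)%N -> (k <= r)%N -> ceil_div k r = 1%N.
Proof.
move=> k0 kr; rewrite /ceil_div.
have -> : (k + r.-1 = 1 * r + k.-1)%N by lia.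
rewrite divnMDl ?divn_small; lia.
Qed.

Lemma ceil2 k r : (r < k)%N -> (k <= 2 * r)%N -> ceil_div k r = 2%N.
Proof.
move=> k0 kr; rewrite /ceil_div.
have -> : (k + r.-1 = 2 * r + (k - r).-1)%N by lia.
rewrite divnMDl ?divn_small; lia.
Qed.

Section Main.
Variables (F : finFieldType) (n : nat) (alpha : F) (b m t l : nat).
Hypotheses (prim : n.-primitive_root alpha) (b1 : (1 <= b)%N) (m1 : (1 <= m)%N)
  (cop : coprime b n) (tn : (t < n)%N) (ml : (m.+1 <= l)%N) (ln : (l <= n - 2)%N).

Lemma n_ge : (m.+3 <= n)%N. Proof. lia. Qed.
Lemma n_gt0 : (0 < n)%N. Proof. lia. Qed.

Definition ex (i : 'I_m.+1) : nat := if (i < m)%N then nat_of_ord i else l.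
Definition be (i : 'I_m.+1) : F := alpha ^+ (t + ex i * b).
Definition gam : F := alpha ^+ b.
Definition ev (c : 'rV[F]_n) (z : F) := \sum_(j < n) c 0 j * z ^+ j.

Lemma ex_lt i : (ex i < n)%N.
Proof. rewrite /ex; case: (ltnP i m) => h; have := ltn_ord i; lia. Qed.

Lemma ex_inj : injective ex.
Proof.
move=> i j; rewrite /ex; case: (ltnP i m) => hi; case: (ltnP j m) => hj; try lia.
- by move=> /ord_inj.
- move=> _; apply: ord_inj; have := ltn_ord i; have := ltn_ord j; lia.
Qed.

Lemma alpha_n : alpha ^+ n = 1. Proof. exact: prim_expr_order. Qed.

Lemma exp_n (k : nat) : (alpha ^+ k) ^+ n = 1.
Proof. by rewrite exprAC alpha_n expr1n. Qed.

Lemma alpha_neq0 : alpha != 0.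
Proof. apply/negP => /eqP a0; have := alpha_n; rewrite a0 expr0n; have -> : (n == 0)%N = false by have := n_gt0; lia. by move=> h; have := oner_neq0 F; rewrite -h eqxx. Qed.

Lemma mod_cancel x y : (x * b == y * b %[mod n]) = (x == y %[mod n]).
Proof.
wlog xy : x y / (x <= y)%N.
  move=> h; case: (leqP x y) => [xy|/ltnW yx]; first exact: h.
  by rewrite eq_sym [RHS]eq_sym; apply: h.
rewrite eq_sym [X in _ = X]eq_sym !eqn_mod_dvd ?leq_mul2r ?xy ?orbT // -mulnBl.
by rewrite Gauss_dvdl // coprime_sym.
Qed.

Lemma gam_prim : n.-primitive_root gam.
Proof. by rewrite /gam prim_root_exp_coprime. Qed.

Lemma gam_inj (j k : 'I_n) : gam ^+ j = gam ^+ k -> j = k.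
Proof.
move/eqP; rewrite (eq_prim_root_expr gam_prim) !modn_small //; by move/eqP/val_inj.
Qed.

Lemma be_inj : injective be.
Proof.
move=> i j /eqP; rewrite /be (eq_prim_root_expr prim) eqn_modDl mod_cancel.
rewrite !modn_small ?ex_lt // => /eqP; exact: ex_inj.
Qed.

Lemma be_n i : be i ^+ n = 1. Proof. exact: exp_n. Qed.

Lemma be_pow (i : 'I_m.+1) (j : nat) : be i ^+ j = alpha ^+ (t * j) * (gam ^+ j) ^+ ex i.
Proof. rewrite /be /gam -!exprM -exprD; congr (_ ^+ _); nia. Qed.

Definition Aset : {set F} :=
  [set alpha ^+ (t + i * b) | i : 'I_m] :|: [set alpha ^+ (t + l * b)].

Lemma inA z : (z \in Aset) = [exists i, z == be i].
Proof.
apply/idP/existsP.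
- rewrite inE => /orP[/imsetP[i _ ->]|].
    by exists (widen_ord (leqnSn m) i); rewrite /be /ex /= ltn_ord.
  by rewrite inE => /eqP ->; exists ord_max; rewrite /be /ex /= ltnn.
- case=> i /eqP ->; rewrite /be /ex; case: (ltnP i m) => h.
    by rewrite inE; apply/orP; left; apply/imsetP; exists (Ordinal h).
  by rewrite inE; apply/orP; right; rewrite inE.
Qed.

Lemma be_inA i : be i \in Aset.
Proof. by rewrite inA; apply/existsP; exists i. Qed.

Lemma size_rV (c : 'rV[F]_n) : (size (rVpoly c) <= n)%N.
Proof. by rewrite /rVpoly size_poly. Qed.

Lemma rVpoly_ev c z : (rVpoly c).[z] = ev c z.
Proof.
rewrite (horner_coef_wide _ (size_rV c)) /ev; apply: eq_bigr => j _.
by rewrite coef_rVpoly_ord.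
Qed.

Definition gA : {poly F} := \prod_(beta in Aset) ('X - beta%:P).

Lemma gA_root i : gA.[be i] = 0.
Proof.
rewrite /gA horner_prod (bigD1 (be i)) ?be_inA //=.
by rewrite !hornerE subrr mul0r.
Qed.

Lemma memC c : (c \in cyclic_code n Aset) = [forall i, ev c (be i) == 0].
Proof.
rewrite /cyclic_code /ideal_code inE -/gA; apply/existsP/forallP.
- case=> v /eqP hv i; rewrite -rVpoly_ev hv.
  set q := rVpoly v * gA; set d := 'X^n - 1.
  have hd : d.[be i] = 0 by rewrite /d !hornerE be_n subrr.
  have e := divp_eq q d.
  have : q.[be i] = 0 by rewrite /q hornerM gA_root mulr0.
  by rewrite {1}e hornerD hornerM hd mulr0 add0r => ->.
- move=> h.
  have dv : gA %| rVpoly c.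
    rewrite /gA -big_enum; apply: uniq_roots_dvdp; last by rewrite uniq_rootsE enum_uniq.
    apply/allP => z; rewrite mem_enum inA => /existsP[i /eqP ->].
    by rewrite /root rVpoly_ev; apply: h.
  case/dvdpP: dv => w hw.
  have gA0 : gA != 0 by rewrite monic_neq0 // monic_prod_XsubC.
  have szw : (size w <= n)%N.
    have [->|w0] := eqVneq w 0; first by rewrite size_poly0.
    apply: leq_trans (size_rV c); rewrite hw; apply: dvdp_leq.
      by rewrite mulf_neq0.
    exact: dvdp_mulIl.
  exists (poly_rV w); rewrite poly_rV_K // -hw modp_small //.
  by rewrite size_Xn_sub_1 ?n_gt0 // ltnS size_rV.
Qed.

Notation CA := (cyclic_code n Aset).
Notation DA := (dual_code CA).

Definition Hrow (y : 'rV[F]_m.+1) : 'rV[F]_n := \row_(j < n) \sum_i y 0 i * be i ^+ j.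

Lemma dualP v : (v \in DA) = [forall c, (c \in CA) ==> (\sum_(i < n) c 0 i * v 0 i == 0)].
Proof. by rewrite inE. Qed.

Lemma Hrow_dual y : Hrow y \in DA.
Proof.
rewrite dualP; apply/forallP => c; apply/implyP; rewrite memC => /forallP h.
rewrite (eq_bigr (fun j : 'I_n => \sum_i y 0 i * (c 0 j * be i ^+ j))); last first.
  by move=> j _; rewrite mxE big_distrr; apply: eq_bigr => i _; rewrite mulrCA.
rewrite exchange_big /= big1 // => i _.
by rewrite -big_distrr /= -/(ev c (be i)) (eqP (h i)) mulr0.
Qed.

Definition V : 'M[F]_m.+1 := \matrix_(i, k) be i ^+ k.

Lemma V_unit : V \in unitmx.
Proof.
apply: contraT => /ker_nonunit [y y0 hy]; case/negP: y0; apply/eqP/rowP => i.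
rewrite mxE; apply: (@vand_zero F _ (fun i => y 0 i) be m.+1 setT) => //.
- by rewrite cardsT card_ord.
- by move=> j; rewrite inE.
- by move=> x z _ _; apply: be_inj.
- move=> k hk; have := congr1 (fun M : 'M[F]_(1, m.+1) => M 0 (Ordinal hk)) hy; rewrite !mxE => h; apply: (etrans _ h).
  by apply: eq_bigr => j _; rewrite mxE.
Qed.

Definition ext (u : 'rV[F]_m.+1) : 'rV[F]_n :=
  \row_(j < n) (if (j < m.+1)%N then u 0 (inord j) else 0).

Lemma ev_ext u z : ev (ext u) z = \sum_(k < m.+1) u 0 k * z ^+ k.
Proof.
rewrite (eq_bigr (fun k : 'I_m.+1 => (fun k : nat => u 0 (inord k) * z ^+ k) k)); last first.
  by move=> k _; rewrite inord_val.
rewrite (big_ord_widen n (fun k => u 0 (inord k) * z ^+ k)); last by have := n_ge; lia.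
rewrite big_mkcond /ev; apply: eq_bigr => j _; rewrite mxE.
by case: ifP => _ //; rewrite mul0r.
Qed.

Lemma surj (r : 'rV[F]_m.+1) : exists u, forall i, ev (ext u) (be i) = r 0 i.
Proof.
exists (r *m invmx V^T) => i; rewrite ev_ext.
have VTu : V^T \in unitmx by rewrite unitmx_tr V_unit.
have := congr1 (fun M : 'M[F]_(1, m.+1) => M 0 i) (mulmxKV VTu r) => /= <-.
by rewrite mxE; apply: eq_bigr => k _; rewrite !mxE.
Qed.

Lemma ev_sub c c' z : ev (c - c') z = ev c z - ev c' z.
Proof. by rewrite /ev -sumrB; apply: eq_bigr => j _; rewrite !mxE mulrBl. Qed.

Lemma ev_delta (j : 'I_n) z : ev (delta_mx 0 j) z = z ^+ j.
Proof.
rewrite /ev (bigD1 j) //= big1 ?addr0; first by rewrite mxE !eqxx mul1r.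
by move=> k kj; rewrite mxE (negbTE kj) andbF mul0r.
Qed.

Lemma ext_hi u (k : 'I_n) : (m.+1 <= k)%N -> ext u 0 k = 0.
Proof. by move=> h; rewrite mxE ltnNge h. Qed.

Lemma unit_vec (j : 'I_n) : (m.+1 <= j)%N -> exists c, [/\ c \in CA, c 0 j = 1 &
  forall k : 'I_n, k != j -> (m.+1 <= k)%N -> c 0 k = 0].
Proof.
move=> hj; have [u hu] := surj (\row_i be i ^+ j).
exists (delta_mx 0 j - ext u); split.
- rewrite memC; apply/forallP => i; by rewrite ev_sub ev_delta hu mxE subrr.
- by rewrite !mxE ltnNge hj !eqxx subr0.
- by move=> k kj hk; rewrite !mxE ltnNge hk (negbTE kj) andbF subr0.
Qed.

Lemma dual_sub v w : v \in DA -> w \in DA -> v - w \in DA.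
Proof.
rewrite !dualP => /forallP hv /forallP hw; apply/forallP => c; apply/implyP => cC.
rewrite (eq_bigr (fun i : 'I_n => c 0 i * v 0 i - c 0 i * w 0 i)); last first.
  by move=> i _; rewrite !mxE mulrBr.
by rewrite sumrB (eqP (implyP (hv c) cC)) (eqP (implyP (hw c) cC)) subrr.
Qed.

Lemma dual_row v : v \in DA -> exists y, v = Hrow y.
Proof.
move=> vD; exists ((\row_k v 0 (widen_ord (ltnW (ltnW n_ge)) k)) *m invmx V).
set y := _ *m _; set w := v - Hrow y.
have wD : w \in DA by apply: dual_sub => //; apply: Hrow_dual.
have wlo : forall k : 'I_n, (k < m.+1)%N -> w 0 k = 0.
  move=> k hk; rewrite /w !mxE.
  have := congr1 (fun M : 'M[F]_(1, m.+1) => M 0 (Ordinal hk)) (mulmxKV V_unit (\row_k v 0 (widen_ord (ltnW (ltnW n_ge)) k))).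
  rewrite /= -/y mxE mxE => h.
  have -> : v 0 k = \sum_j y 0 j * V j (Ordinal hk).
    by rewrite h; congr (v 0 _); apply: val_inj.
  rewrite (eq_bigr (fun i => y 0 i * be i ^+ k)) ?subrr // => i _; by rewrite [V _ _]mxE.
suff : w = 0 by move/eqP; rewrite /w subr_eq0 => /eqP.
apply/rowP => j; rewrite [RHS]mxE.
case: (ltnP j m.+1) => hj; first exact: wlo.
have [c [cC cj c0]] := @unit_vec j hj.
move: wD; rewrite dualP => /forallP /(_ c) /implyP /(_ cC) /eqP.
rewrite (bigD1 j) //= big1 ?addr0 ?cj ?mul1r //.
move=> k kj; case: (ltnP k m.+1) => hk; first by rewrite wlo // mulr0.
by rewrite c0 // mul0r.
Qed.

Definition Gm : 'M[F]_(n, m.+1) := \matrix_(j, i) be i ^+ j.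

Lemma mulG c : c *m Gm = \row_i ev c (be i).
Proof. by apply/rowP => i; rewrite !mxE; apply: eq_bigr => j _; rewrite mxE. Qed.

Lemma code_dim_CA : code_dim CA = (n - m.+1)%N.
Proof.
pose f : 'Hom('rV[F]_n, 'rV[F]_m.+1) := linfun (mulmxr Gm).
have fE c : f c = \row_i ev c (be i) by rewrite lfunE /= mulG.
have memK c : (c \in lker f) = (c \in CA).
  rewrite memv_ker fE memC; apply/eqP/forallP => [h i|h].
    by have := congr1 (fun M : 'rV[F]_m.+1 => M 0 i) h; rewrite !mxE => ->.
  by apply/rowP => i; rewrite !mxE; apply/eqP.
have span : <<enum CA>>%VS = lker f.
  apply/vspaceP => c; apply/idP/idP.
  - apply/subvP; apply/span_subvP => x; rewrite mem_enum -memK //.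
  - by rewrite memK => cC; apply: memv_span; rewrite mem_enum.
rewrite /code_dim span.
have := limg_ker_dim f fullv; rewrite capfv.
have img : (f @: fullv)%VS = fullv.
  apply/eqP; rewrite eqEsubv subvf /=; apply/subvP => r _.
  have [u hu] := surj r.
  have -> : r = f (ext u) by rewrite fE; apply/rowP => i; rewrite !mxE hu.
  exact: memv_img (memvf _).
rewrite img !dimvf /=. rewrite !dim_matrix. lia.
Qed.

Lemma Hrow_nz y : y != 0 -> Hrow y != 0.
Proof.
move=> y0; apply/negP => /eqP hy; case/negP: y0; apply/eqP/rowP => i.
rewrite mxE; apply: (@vand_zero F _ (fun i => y 0 i) be m.+1 setT) => //.
- by rewrite cardsT card_ord.
- by move=> j; rewrite inE.
- by move=> x z _ _; apply: be_inj.
- move=> k hk; have kn : (k < n)%N by have := n_ge; lia.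
  by have := congr1 (fun M : 'rV[F]_n => M 0 (Ordinal kn)) hy; rewrite !mxE.
Qed.

Definition Hf (f : 'I_m.+1 -> 'I_n) : 'M[F]_m.+1 := \matrix_(i, k) be i ^+ (f k).

Lemma ev_sub_f (f : 'I_m.+1 -> 'I_n) (c : 'rV[F]_n) z : injective f ->
  (forall j, (forall k, f k != j) -> c 0 j = 0) ->
  ev c z = \sum_k c 0 (f k) * z ^+ (f k).
Proof.
move=> fi hc; rewrite /ev (bigID (mem (f @: setT))) /= [X in _ + X]big1 ?addr0.
  rewrite big_imset /=; last by move=> x y _ _; apply: fi.
  by apply: eq_bigl => k; rewrite inE.
move=> j jn; rewrite hc ?mul0r // => k; apply/eqP => fkj; case/negP: jn.
by rewrite -fkj; apply: imset_f; rewrite inE.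
Qed.

Lemma wt_supp (c : 'rV[F]_n) : wt c = #|[set i | c 0 i != 0]|. Proof. by []. Qed.

Lemma caseA_C (hA : forall f, injective f -> Hf f \in unitmx) (c : 'rV[F]_n) :
  c \in CA -> c != 0 -> (m.+2 <= wt c)%N.
Proof.
move=> cC c0; rewrite ltnNge; apply/negP => hw.
set A := [set i | c 0 i != 0].
have [f [fi fA _]] : exists f : 'I_m.+1 -> 'I_n, [/\ injective f,
    forall j, j \in A -> exists k, f k = j & forall k, f k \in setT].
  apply: pick_f; first exact: subsetT.
  have hw' : (#|A| <= m.+1)%N := hw.
  by rewrite cardsT card_ord hw' /=; have := n_ge; lia.
have hc : forall j, (forall k, f k != j) -> c 0 j = 0.
  move=> j hj; apply/eqP; apply: contraT => cj.
  have : j \in A by rewrite inE.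
  by case/fA => k fk; have := hj k; rewrite fk eqxx.
pose x := \row_k c 0 (f k).
have hx : x *m (Hf f)^T = 0.
  apply/rowP => i; rewrite !mxE.
  move: (cC); rewrite memC => /forallP /(_ i) /eqP.
  rewrite (@ev_sub_f f c (be i) fi hc) => h; rewrite -[RHS]h; apply: eq_bigr => k _.
  by rewrite !mxE.
have x0 : x = 0 by apply: unit_ker hx; rewrite unitmx_tr; apply: hA.
case/negP: c0; apply/eqP/rowP => j; rewrite [RHS]mxE.
have [jA|jA] := boolP (j \in A).
  case/fA: jA => k <-.
  by have := congr1 (fun M : 'rV[F]_m.+1 => M 0 k) x0; rewrite !mxE.
by move: jA; rewrite inE negbK => /eqP.
Qed.

Lemma wt_zeros (v : 'rV[F]_n) : addn (wt v) #|[set j | v 0 j == 0]| = n.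
Proof.
rewrite -[RHS](card_ord n) -(cardsC [set j | v 0 j == 0]) addnC; congr (_ + _)%N.
by rewrite /wt; apply: eq_card => j; rewrite !inE.
Qed.

Lemma caseA_D (hA : forall f, injective f -> Hf f \in unitmx) y :
  y != 0 -> (n - m <= wt (Hrow y))%N.
Proof.
move=> y0; have := wt_zeros (Hrow y); set Z := [set j | _].
suff : (#|Z| <= m)%N by lia.
rewrite leqNgt; apply/negP => hZ.
have [f [fi _ fZ]] : exists f : 'I_m.+1 -> 'I_n, [/\ injective f,
    forall j, j \in set0 -> exists k, f k = j & forall k, f k \in Z].
  by apply: pick_f; [exact: sub0set | rewrite cards0].
case/negP: y0; apply/eqP; apply: (@unit_ker _ _ (Hf f) y (hA f fi)).
apply/rowP => k; have := fZ k; rewrite inE mxE [RHS]mxE => /eqP <-; rewrite !mxE.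
by apply: eq_bigr => i _; rewrite mxE.
Qed.

Lemma caseB_C (f : 'I_m.+1 -> 'I_n) : injective f -> Hf f \notin unitmx ->
  exists c, [/\ c \in CA, c != 0 & (wt c <= m.+1)%N].
Proof.
move=> fi; rewrite -unitmx_tr => /ker_nonunit [x x0 hx].
pose c : 'rV[F]_n := \row_j \sum_k x 0 k * (f k == j)%:R.
have cf k : c 0 (f k) = x 0 k.
  rewrite mxE (bigD1 k) //= eqxx mulr1 big1 ?addr0 // => k' kk.
  by rewrite (inj_eq fi) (negbTE kk) mulr0.
have hc : forall j, (forall k, f k != j) -> c 0 j = 0.
  by move=> j hj; rewrite mxE big1 // => k _; rewrite (negbTE (hj k)) mulr0.
exists c; split.
- rewrite memC; apply/forallP => i; rewrite (@ev_sub_f f c (be i) fi hc).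
  have := congr1 (fun M : 'rV[F]_m.+1 => M 0 i) hx; rewrite [RHS]mxE [LHS]mxE => h.
  by apply/eqP; apply: etrans h; apply: eq_bigr => k _; rewrite cf !mxE.
- apply: contraNneq x0 => c0; apply/eqP/rowP => k; rewrite -cf c0 !mxE //.
- apply: (@leq_trans #|f @: setT|); last by rewrite (card_imset _ fi) cardsT card_ord.
  apply: subset_leq_card; apply/subsetP => j; rewrite inE => cj.
  apply: contraR cj => jn; rewrite hc ?eqxx // => k; apply: contra jn => /eqP <-.
  by apply: imset_f; rewrite inE.
Qed.

Lemma caseB_D (f : 'I_m.+1 -> 'I_n) : injective f -> Hf f \notin unitmx ->
  exists y, y != 0 /\ (wt (Hrow y) <= n - m.+1)%N.
Proof.
move=> fi /ker_nonunit [y y0 hy]; exists y; split => //.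
have := wt_zeros (Hrow y); set Z := [set j | _].
suff : (m.+1 <= #|Z|)%N by lia.
rewrite -(card_ord m.+1) -cardsT -(card_imset setT fi); apply: subset_leq_card.
apply/subsetP => j /imsetP [k _ ->]; rewrite inE mxE.
have := congr1 (fun M : 'rV[F]_m.+1 => M 0 k) hy; rewrite [RHS]mxE [LHS]mxE => h.
by apply/eqP; apply: etrans h; apply: eq_bigr => i _; rewrite mxE.
Qed.

Lemma bch (c : 'rV[F]_n) : c \in CA -> c != 0 -> (m.+1 <= wt c)%N.
Proof.
move=> cC c0; rewrite ltnNge; apply/negP => hw; case/negP: c0.
have h := @vand_zero F _ (fun j => c 0 j * alpha ^+ (t * j)) (fun j => gam ^+ j) m
  [set i | c 0 i != 0] hw.
apply/eqP/rowP => j; rewrite mxE.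
have : c 0 j * alpha ^+ (t * j) = 0.
  apply: h.
  - by move=> k; rewrite inE negbK => /eqP ->; rewrite mul0r.
  - by move=> x z _ _; apply: gam_inj.
  - move=> i hi; have hi' : (i < m.+1)%N by lia.
    move: cC; rewrite memC => /forallP /(_ (Ordinal hi')) /eqP h; apply: etrans h.
    apply: eq_bigr => k _; rewrite be_pow /ex /= hi mulrA //.
by move/eqP; rewrite mulf_eq0 expf_eq0 (negbTE alpha_neq0) andbF orbF => /eqP.
Qed.

Lemma singleton_ub : exists c, [/\ c \in CA, c != 0 & (wt c <= m.+2)%N].
Proof.
have hj : (m.+1 < n)%N by have := n_ge; lia.
have [c [cC cj c0]] := @unit_vec (Ordinal hj) (leqnn _).
exists c; split => //.
  by apply/eqP => /rowP /(_ (Ordinal hj)); rewrite cj mxE; apply/eqP; exact: oner_neq0.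
have hw : (m.+2 <= n)%N by lia.
apply: leq_trans (_ : #|[set widen_ord hw k | k : 'I_m.+2]| <= m.+2)%N.
  apply: subset_leq_card; apply/subsetP => k; rewrite inE => ck.
  have hk : (k < m.+2)%N.
    rewrite ltnNge; apply/negP => hk; case/negP: ck.
    have kj : k != Ordinal hj.
      by apply/negP => /eqP /(congr1 val) /= e; move: hk; rewrite e ltnn.
    have mk : (m.+1 <= k)%N by lia.
    by rewrite (c0 k kj mk) eqxx.
  by apply/imsetP; exists (Ordinal hk) => //; apply: val_inj.
apply: leq_trans (leq_imset_card _ _) _; by rewrite card_ord.
Qed.

Lemma Hrow_poly y (j : 'I_n) :
  Hrow y 0 j = alpha ^+ (t * j) *
    ((\poly_(i < m) y 0 (inord i)).[gam ^+ j] + y 0 ord_max * (gam ^+ j) ^+ l).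
Proof.
rewrite mxE big_ord_recr /= horner_poly mulrDr big_distrr /=; congr (_ + _).
  apply: eq_bigr => i _; rewrite be_pow /ex /= ltn_ord.
  have -> : (inord i : 'I_m.+1) = widen_ord (leqnSn m) i.
    by apply: val_inj; rewrite /= inordK // ltnW // ltnS ltn_ord.
  by rewrite mulrCA.
by rewrite be_pow /ex /= ltnn mulrCA.
Qed.

Lemma dual_wt y : y != 0 -> (n + 1 <= m + 2 * wt (Hrow y))%N.
Proof.
move=> y0; have := wt_zeros (Hrow y); set Z := [set j | _] => hZ.
pose P : {poly F} := \poly_(i < m) y 0 (inord i).
pose ym := y 0 ord_max.
pose rs := [seq gam ^+ (nat_of_ord j) | j <- enum Z].
have urs : uniq rs.
  rewrite map_inj_in_uniq ?enum_uniq // => j k _ _ /gam_inj ->; done.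
have srs : size rs = #|Z| by rewrite size_map -cardE.
have rZ z : z \in rs -> P.[z] + ym * z ^+ l = 0.
  case/mapP => j; rewrite mem_enum inE Hrow_poly => /eqP h ->.
  move/eqP: h; rewrite mulf_eq0 expf_eq0 (negbTE alpha_neq0) andbF /= => /eqP.
  by rewrite /P /ym.
have zn z : z \in rs -> z ^+ n = 1.
  by case/mapP => j _ ->; rewrite exprAC /gam exp_n expr1n.
have [ym0|ym0] := eqVneq ym 0.
  have P0 : P != 0.
    apply: contraNneq y0 => P0; apply/eqP/rowP => i; rewrite mxE.
    have [im|] := ltnP i m.
      have := congr1 (fun q : {poly F} => q`_i) P0.
      by rewrite coef_poly im coef0 inord_val.
    move=> mi; have -> : i = ord_max by apply: val_inj; have := ltn_ord i; rewrite /=; lia.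
    exact: ym0.
  have := max_poly_roots P0 _ urs; rewrite srs.
  have -> : all (root P) rs.
    by apply/allP => z /rZ; rewrite ym0 mul0r addr0 => h; rewrite /root h.
  move=> /(_ isT) h; have := size_poly m (fun i => y 0 (inord i)); rewrite -/P.
  move=> hs; have h2 : (#|Z| < m)%N := leq_trans h hs; have := n_ge; lia.
pose g1 := P + ym *: 'X^l.
have g10 : g1 != 0.
  apply/negP => /eqP /(congr1 (fun q : {poly F} => q`_l)).
  rewrite coefD coef_poly coefZ coefXn eqxx mulr1 coef0.
  have -> : (l < m)%N = false by lia.
  by rewrite add0r => /eqP; rewrite (negbTE ym0).
have sg1 : (size g1 <= l.+1)%N.
  apply: leq_trans (size_polyD _ _) _; rewrite geq_max; apply/andP; split.
    by apply: leq_trans (size_poly _ _) _; lia.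
  by apply: leq_trans (size_scale_leq _ _) _; rewrite size_polyXn.
have h1 := max_poly_roots g10.
have rg1 : all (root g1) rs.
  by apply/allP => z /rZ h; rewrite /root /g1 hornerD hornerZ hornerXn h.
move: (h1 rs rg1 urs); rewrite srs => hz1.
pose g2 := 'X^(n - l) * P + ym%:P.
have g20 : g2 != 0.
  apply/negP => /eqP /(congr1 (fun q : {poly F} => q`_0)).
  rewrite coefD coefXnM coefC eqxx coef0.
  have -> : (0 < n - l)%N by lia.
  by rewrite add0r => /eqP; rewrite (negbTE ym0).
have sg2 : (size g2 <= n - l + m)%N.
  apply: leq_trans (size_polyD _ _) _; rewrite geq_max; apply/andP; split.
    apply: leq_trans (size_polyMleq _ _) _; rewrite size_polyXn.
    have := size_poly m (fun i => y 0 (inord i)); rewrite -/P; lia.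
  by apply: leq_trans (size_polyC_leq1 _) _; lia.
have rg2 : all (root g2) rs.
  apply/allP => z zr; rewrite /root /g2 hornerD hornerM hornerXn hornerC.
  have e : z ^+ (n - l) * (P.[z] + ym * z ^+ l) = 0 by rewrite rZ // mulr0.
  rewrite mulrDr mulrCA -exprD subnK ?(zn z zr) ?mulr1 in e; last by lia.
  by apply/eqP.
move: (max_poly_roots g20 rg2 urs); rewrite srs => hz2; have := n_ge.
have k1 : (#|Z| < l.+1)%N := leq_trans hz1 sg1.
have k2 : (#|Z| < n - l + m)%N := leq_trans hz2 sg2.
lia.
Qed.

Lemma row_nz (v : 'rV[F]_n) : v != 0 -> exists j, v 0 j != 0.
Proof.
move=> v0; apply: NNPP => h; case/negP: v0; apply/eqP/rowP => j; rewrite mxE.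
by apply/eqP; apply: NNPP => hj; apply: h; exists j; apply/negP.
Qed.

Lemma locality : (2 <= mindist DA)%N -> is_LRC CA (mindist DA).-1 2.
Proof.
move=> dd2; split => //; first lia.
move=> i0.
pose y1 : 'rV[F]_m.+1 := \row_i 1.
have hy1 : y1 != 0.
  by apply/negP => /eqP /rowP /(_ ord0); rewrite !mxE; apply/eqP; exact: oner_neq0.
have [v [vD v0 wv]] := @mindist_attained F n DA (Hrow y1) (Hrow_dual y1) (Hrow_nz y1 hy1).
have [y vy] := dual_row v vD.
have [j0 vj0] := row_nz v v0.
pose s := (j0 + n - i0)%N.
have n0 := n_gt0.
pose sh (j : 'I_n) : 'I_n := Ordinal (ltn_pmod (s + j) n0).
have sh_inj : injective sh.
  move=> j k /(congr1 val) /= /eqP; rewrite eqn_modDl !modn_small // => /eqP.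
  exact: val_inj.
pose y' : 'rV[F]_m.+1 := \row_k (y 0 k * be k ^+ s).
have e' j : Hrow y' 0 j = v 0 (sh j).
  rewrite vy !mxE; apply: eq_bigr => k _; rewrite mxE -mulrA -exprD.
  by rewrite /= (expr_mod _ (be_n k)).
pose S := [set j | Hrow y' 0 j != 0].
have SE : S = sh @^-1: [set j | v 0 j != 0].
  by apply/setP => j; rewrite !inE e'.
exists S; split.
- rewrite inE e'; have -> : sh i0 = j0 => //.
  apply: val_inj => /=; rewrite /s subnK; last by have := ltn_ord i0; lia.
  by rewrite -{2}(modn_small (ltn_ord j0)) -[in RHS](addn0 j0) -(modnn n) modnDmr.
- rewrite SE card_preimset // -/(wt v) wv; lia.
- move=> c cC [j jS cj].
  rewrite leqNgt; apply/negP => hT.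
  have hS : forall k, k != j -> k \in S -> c 0 k = 0.
    move=> k kj kS; apply/eqP; apply: contraT => ck.
    have : (#|[set j; k]| <= #|[set x in S | c ord0 x != 0%R]|)%N.
      apply: subset_leq_card; apply/subsetP => x; rewrite !inE.
      by move: jS kS; rewrite !inE => jS kS; case/orP => /eqP ->; apply/andP; split.
    rewrite cards2 (eq_sym j) kj => h; have := leq_ltn_trans h hT; by rewrite ltnn.
  have := Hrow_dual y'; rewrite dualP => /forallP /(_ c) /implyP /(_ cC) /eqP.
  rewrite (bigD1 j) //= big1 ?addr0.
    by move/eqP; rewrite mulf_eq0 (negbTE cj) /=; move: jS; rewrite inE => /negbTE ->.
  move=> k kj; have [kS|kS] := boolP (k \in S); first by rewrite hS // mul0r.
  by move: kS; rewrite inE negbK => /eqP ->; rewrite mulr0.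
Qed.

Lemma main_sec : optimal_LRC CA (mindist DA).-1 2.
Proof.
pose y1 : 'rV[F]_m.+1 := \row_i 1.
have hy1 : y1 != 0.
  by apply/negP => /eqP /rowP /(_ ord0); rewrite !mxE; apply/eqP; exact: oner_neq0.
have [v [vD v0 wv]] := @mindist_attained F n DA (Hrow y1) (Hrow_dual y1) (Hrow_nz y1 hy1).
have [y vy] := dual_row v vD.
have y0 : y != 0.
  apply/negP => /eqP y0; case/negP: v0; apply/eqP/rowP => j.
  by rewrite vy y0 !mxE big1 // => i _; rewrite mxE mul0r.
have ddlb : (n + 1 <= m + 2 * mindist DA)%N by rewrite -wv vy; apply: dual_wt.
have hn := n_ge.
have dd2 : (2 <= mindist DA)%N by lia.
split; first exact: locality.
have dlb : (m.+1 <= mindist CA)%N.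
  by apply: mindist_ge => [c cC c0|]; [apply: bch | lia].
have dub : (mindist CA <= m.+2)%N.
  by have [c [cC c0 wc]] := singleton_ub; apply: leq_trans (@mindist_le _ _ _ _ cC c0) wc.
rewrite code_dim_CA.
case: (classic (forall f, injective f -> Hf f \in unitmx)) => [hA|hB].
- have dA : mindist CA = m.+2.
    apply/eqP; rewrite eqn_leq dub /=.
    by apply: mindist_ge => [c cC c0|]; [apply: caseA_C | lia].
  have ddA : (n - m <= mindist DA)%N by rewrite -wv vy; apply: caseA_D.
  rewrite dA (@ceil1 (n - m.+1) (mindist DA).-1); [|lia|lia].
  lia.
- have [f hf] := not_all_ex_not _ _ hB.
  have [fi fu] := imply_to_and _ _ hf.
  have [c [cC c0 wc]] := @caseB_C f fi (introN idP fu).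
  have dB : mindist CA = m.+1.
    by apply/eqP; rewrite eqn_leq dlb andbT; apply: leq_trans (@mindist_le _ _ _ _ cC c0) wc.
  have [y2 [y20 wy2]] := @caseB_D f fi (introN idP fu).
  have ddB : (mindist DA <= n - m.+1)%N.
    by apply: leq_trans (@mindist_le _ _ _ _ (Hrow_dual y2) (Hrow_nz y2 y20)) wy2.
  rewrite dB (@ceil2 (n - m.+1) (mindist DA).-1); [|lia|lia].
  lia.
Qed.

End Main.

Theorem corollary4p6 (F : finFieldType) (n : nat) (alpha : F)
    (b m t l : nat) :
  (n %| #|F|.-1)%N ->
  n.-primitive_root alpha ->
  (1 <= b)%N -> (1 <= m)%N -> coprime b n ->
  (t < n)%N ->
  (m.+1 <= l)%N -> (l <= n - 2)%N ->
  let A : {set F} :=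
    [set alpha ^+ (t + i * b) | i : 'I_m] :|: [set alpha ^+ (t + l * b)] in
  let CA := cyclic_code n A in
  optimal_LRC CA (mindist (dual_code CA)).-1 2.
Proof.
move=> _ prim b1 m1 cop tn ml ln A CA.
exact: (@main_sec F n alpha b m t l).
Qed.
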